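(* Let $n\ge1$ and $K\in\mathcal S_n\setminus\{\emptyset,\mathbb R^n\}$. Then \[ \mathrm{Outrad}(K)+\mathrm{Inrad}(K^c)=1. \] Moreover, there is a unique point $x$ with $K\subseteq B(x,\mathrm{Outrad}(K))$, and it is also the unique point with $B(x,\mathrm{Inrad}(K^c))\subseteq K^c$; i.e., the smallest ball containing $K$ and the largest ball contained in $K^c$ are unique, concentric, and $c$-dual to one another.
   Context: $B(x,r)$ is the closed Euclidean ball. For $A\subseteq\mathbb R^n$, $A^c=\bigcap_{x\in A}B(x,1)$. $\mathcal S_n$ is the class of all sets of the form $\bigcap_{x\in A}B(x,1)$, $A\subseteq\mathbb R^n$. $\mathrm{Outrad}(K)=\min\{R:\exists x,\ K\subseteq B(x,R)\}$ and $\mathrm{Inrad}(K)=\max\{r:\exists x,\ B(x,r)\subseteq K\}$. *)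

(* Defs.v *)
From HB Require Import structures.
From mathcomp Require Import all_boot all_order all_algebra.
From mathcomp Require Import all_classical all_reals.
Set Implicit Arguments. Unset Strict Implicit. Unset Printing Implicit Defensive.
Import Order.TTheory GRing.Theory Num.Theory.
Local Open Scope ring_scope.
Local Open Scope classical_set_scope.

Section Defs.
Variable (R : realType) (n : nat).

Definition edist (x y : 'rV[R]_n) : R :=
  Num.sqrt (\sum_(i < n) (x ord0 i - y ord0 i) ^+ 2).

Definition cball (x : 'rV[R]_n) (r : R) : set 'rV[R]_n :=
  [set y | edist x y <= r].

(* A^c = \bigcap_{x in A} B(x,1)  (= R^n when A is empty) *)
Definition cdual (A : set 'rV[R]_n) : set 'rV[R]_n :=
  [set y | forall x, A x -> y \in cball x 1].

Definition inS (K : set 'rV[R]_n) : Prop :=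
  exists A : set 'rV[R]_n, K = cdual A.

Definition Outrad (K : set 'rV[R]_n) : R :=
  inf [set r : R | exists x, K `<=` cball x r].

Definition Inrad (K : set 'rV[R]_n) : R :=
  sup [set r : R | exists x, cball x r `<=` K].

End Defs.

(* Main.v *)
Require Import Defs.
From HB Require Import structures.
From mathcomp Require Import all_boot all_order all_algebra.
From mathcomp Require Import all_classical all_reals.
From mathcomp Require Import ring lra.
Import Order.TTheory GRing.Theory Num.Theory.
Local Open Scope ring_scope.
Local Open Scope classical_set_scope.
Set Implicit Arguments. Unset Strict Implicit. Unset Printing Implicit Defensive.

Section Helpers.
Variable (R : realType) (n : nat).
Implicit Types (x y z c k : 'rV[R]_n).

Definition sq x y : R := \sum_(i < n) (x ord0 i - y ord0 i) ^+ 2.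

Lemma edistE x y : edist x y = Num.sqrt (sq x y).
Proof. by []. Qed.

Lemma sq_ge0 x y : 0 <= sq x y.
Proof. by apply: sumr_ge0 => i _; exact: sqr_ge0. Qed.

Lemma edist_ge0 x y : 0 <= edist x y.
Proof. exact: sqrtr_ge0. Qed.

Lemma sq_sym x y : sq x y = sq y x.
Proof. by apply: eq_bigr => i _; rewrite -sqrrN opprB. Qed.

Lemma edist_sym x y : edist x y = edist y x.
Proof. by rewrite !edistE sq_sym. Qed.

Lemma sqrt_le (a r : R) : 0 <= r -> (Num.sqrt a <= r) = (a <= r ^+ 2).
Proof.
move=> r0; rewrite -{1}(ger0_norm r0) -sqrtr_sqr ler_sqrt //; exact: sqr_ge0.
Qed.

Lemma sqrt_eq (a t : R) : 0 <= t -> a = t ^+ 2 -> Num.sqrt a = t.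
Proof. by move=> t0 ->; rewrite sqrtr_sqr ger0_norm. Qed.

Lemma edist_le x y r : 0 <= r -> (edist x y <= r) = (sq x y <= r ^+ 2).
Proof. exact: sqrt_le. Qed.

Lemma sq_coord x y i : (x ord0 i - y ord0 i) ^+ 2 <= sq x y.
Proof.
rewrite /sq (bigD1 i) //= lerDl; apply: sumr_ge0 => j _; exact: sqr_ge0.
Qed.

Lemma sq_eq0 x y : sq x y <= 0 -> x = y.
Proof.
move=> h; apply/rowP => i.
have h1 := sq_coord x y i.
have h2 : (x ord0 i - y ord0 i) ^+ 2 = 0.
  by apply/eqP; rewrite eq_le sqr_ge0 andbT (le_trans h1 h).
by apply/eqP; rewrite -subr_eq0 -sqrf_eq0 h2.
Qed.

Lemma CS (u v : 'I_n -> R) :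
  \sum_i u i * v i <= Num.sqrt (\sum_i u i ^+ 2) * Num.sqrt (\sum_i v i ^+ 2).
Proof.
set a := Num.sqrt _; set b := Num.sqrt _.
have Su : 0 <= \sum_i u i ^+ 2 by apply: sumr_ge0 => i _; exact: sqr_ge0.
have Sv : 0 <= \sum_i v i ^+ 2 by apply: sumr_ge0 => i _; exact: sqr_ge0.
have a0 : 0 <= a by exact: sqrtr_ge0.
have b0 : 0 <= b by exact: sqrtr_ge0.
have [az|ap] := eqVneq a 0.
  have uz : forall i, u i = 0.
    move=> i; apply/eqP; rewrite -sqrf_eq0 eq_le sqr_ge0 andbT.
    have : \sum_i u i ^+ 2 <= 0 by rewrite -sqrtr_eq0 -/a az.
    apply: le_trans; rewrite (bigD1 i) //= lerDl; apply: sumr_ge0 => j _; exact: sqr_ge0.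
  by rewrite big1 ?az ?mul0r // => i _; rewrite uz mul0r.
have [bz|bp] := eqVneq b 0.
  have vz : forall i, v i = 0.
    move=> i; apply/eqP; rewrite -sqrf_eq0 eq_le sqr_ge0 andbT.
    have : \sum_i v i ^+ 2 <= 0 by rewrite -sqrtr_eq0 -/b bz.
    apply: le_trans; rewrite (bigD1 i) //= lerDl; apply: sumr_ge0 => j _; exact: sqr_ge0.
  by rewrite big1 ?bz ?mulr0 // => i _; rewrite vz mulr0.
have ap' : 0 < a by rewrite lt_def ap a0.
have bp' : 0 < b by rewrite lt_def bp b0.
have ha : a ^+ 2 = \sum_i u i ^+ 2 by rewrite sqr_sqrtr.
have hb : b ^+ 2 = \sum_i v i ^+ 2 by rewrite sqr_sqrtr.
have key : 2 * (a * b) * (\sum_i u i * v i) <= 2 * (a * b) * (a * b).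
  have -> : 2 * (a * b) * (a * b) = b ^+ 2 * a ^+ 2 + a ^+ 2 * b ^+ 2 by ring.
  rewrite [in b ^+ 2 * a ^+ 2]ha [in a ^+ 2 * b ^+ 2]hb !mulr_sumr -big_split /=; apply: ler_sum => i _.
  have := sqr_ge0 (b * u i - a * v i); nra.
have abp : 0 < 2 * (a * b) by apply: mulr_gt0 => //; apply: mulr_gt0.
by rewrite -(ler_pM2l abp).
Qed.

Lemma triangle x y z : edist x z <= edist x y + edist y z.
Proof.
rewrite edist_le; last by apply: addr_ge0; exact: edist_ge0.
have := CS (fun i => x ord0 i - y ord0 i) (fun i => y ord0 i - z ord0 i).
rewrite -!/(sq _ _) -!edistE => hcs.
have e1 : edist x y ^+ 2 = sq x y by rewrite sqr_sqrtr // sq_ge0.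
have e2 : edist y z ^+ 2 = sq y z by rewrite sqr_sqrtr // sq_ge0.
have -> : sq x z = sq x y + sq y z + 2 * \sum_i (x ord0 i - y ord0 i) * (y ord0 i - z ord0 i).
  rewrite /sq mulr_sumr -!big_split /=; apply: eq_bigr => i _; ring.
rewrite -e1 -e2; nra.
Qed.


Lemma sq_sqrt x y : Num.sqrt (sq x y) ^+ 2 = sq x y.
Proof. by rewrite sqr_sqrtr // sq_ge0. Qed.

Lemma collinear (hn : (1 <= n)%N) y k s : 0 <= s ->
  exists z, edist y z = s /\ edist z k = edist y k + s.
Proof.
move=> s0.
have [->|ne] := eqVneq y k.
  pose i0 : 'I_n := Ordinal hn.
  exists (k + s *: delta_mx 0 i0).
  have hs : forall (f : 'I_n -> R), (forall i, f i = (s * (i == i0)%:R) ^+ 2) ->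
      \sum_i f i = s ^+ 2.
    move=> f hf; rewrite (bigD1 i0) //= big1 ?addr0.
      by rewrite hf eqxx mulr1.
    by move=> j /negbTE hj; rewrite hf hj mulr0 expr0n.
  have e1 : edist k (k + s *: delta_mx 0 i0) = s.
    apply: sqrt_eq => //; apply: hs => i; rewrite !mxE /= -sqrrN; congr (_ ^+ 2).
    ring.
  have e2 : edist (k + s *: delta_mx 0 i0) k = s by rewrite edist_sym.
  by rewrite e1 e2 edistE /sq big1 ?sqrtr0 ?add0r // => i _; rewrite subrr expr0n.
set d := edist y k.
have d0 : 0 < d.
  rewrite lt_def edist_ge0 andbT; apply/negP => /eqP dz; move/eqP: ne; apply.
  by apply: sq_eq0; rewrite -sqrtr_eq0 -edistE -/d dz.
have hd : d ^+ 2 = sq y k by rewrite sq_sqrt.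
set c := s / d.
exists (y + c *: (y - k)); split.
  apply: sqrt_eq => //.
  have -> : s = c * d by rewrite /c divfK // gt_eqF.
  rewrite exprMn hd /sq mulr_sumr; apply: eq_bigr => i _; rewrite !mxE; ring.
apply: sqrt_eq; first by apply: addr_ge0 => //; exact: ltW.
have -> : d + s = (1 + c) * d by rewrite /c mulrDl mul1r divfK // gt_eqF.
rewrite exprMn hd /sq mulr_sumr; apply: eq_bigr => i _; rewrite !mxE; ring.
Qed.

Lemma parallelogram c1 c2 k :
  4 * sq (2^-1 *: (c1 + c2)) k + sq c1 c2 = 2 * (sq c1 k + sq c2 k).
Proof.
rewrite /sq !mulr_sumr -!big_split /= mulr_sumr; apply: eq_bigr => i _.
by rewrite !mxE; field.
Qed.

End Helpers.

Section Main.
Variable (R : realType) (n : nat) (K : set 'rV[R]_n).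
Hypothesis hn : (1 <= n)%N.
Variable (k0 a : 'rV[R]_n).
Hypothesis hk0 : K k0.
Hypothesis hKa : K `<=` cball a 1.

Let E := [set r : R | exists x, K `<=` cball x r].
Let Rad := Outrad K.

Lemma E_lb : lbound E 0.
Proof. move=> r [x hx]; have := hx _ hk0; rewrite /cball /=; apply: le_trans; exact: edist_ge0. Qed.

Lemma E1 : E 1. Proof. by exists a. Qed.

Lemma hasinfE : has_inf E.
Proof. by split; [exists 1; exact: E1 | exists 0; exact: E_lb]. Qed.

Lemma Rad_ge0 : 0 <= Rad.
Proof. apply: lb_le_inf; [exists 1; exact: E1| exact: E_lb]. Qed.

Lemma E_ge r : E r -> Rad <= r.
Proof. by move=> Er; apply: ge_inf => //; exists 0; exact: E_lb. Qed.

Lemma Rad_le1 : Rad <= 1.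
Proof. exact: E_ge E1. Qed.

Lemma mid c1 r1 c2 r2 : K `<=` cball c1 r1 -> K `<=` cball c2 r2 ->
  4 * Rad ^+ 2 + sq c1 c2 <= 2 * (r1 ^+ 2 + r2 ^+ 2).
Proof.
move=> h1 h2.
have r10 : 0 <= r1 by have := h1 _ hk0; rewrite /cball /=; apply: le_trans; exact: edist_ge0.
have r20 : 0 <= r2 by have := h2 _ hk0; rewrite /cball /=; apply: le_trans; exact: edist_ge0.
set m := 2^-1 *: (c1 + c2).
set Q := (2 * (r1 ^+ 2 + r2 ^+ 2) - sq c1 c2) / 4.
have bnd : forall k, K k -> sq m k <= Q.
  move=> k Kk; have := parallelogram c1 c2 k.
  have := h1 _ Kk; have := h2 _ Kk; rewrite /cball /= !edist_le // => q2 q1.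
  rewrite /Q => hp; rewrite ler_pdivlMr //; lra.
have Q0 : 0 <= Q by apply: le_trans (bnd _ hk0); exact: sq_ge0.
have EQ : E (Num.sqrt Q).
  by exists m => k Kk; rewrite /cball /= edistE; apply: ler_wsqrtr; apply: bnd.
have := E_ge EQ; have := Rad_ge0; have := sqr_sqrtr Q0.
rewrite /Q => hs r0 hr.
have : Rad ^+ 2 <= Num.sqrt Q ^+ 2 by rewrite ler_pXn2r // ?nnegrE // sqrtr_ge0.
rewrite hs ler_pdivlMr //; lra.
Qed.

Lemma uniq_center c1 c2 : K `<=` cball c1 Rad -> K `<=` cball c2 Rad -> c1 = c2.
Proof.
move=> h1 h2; apply: sq_eq0; have := mid h1 h2; lra.
Qed.

Let T c r e := K `<=` cball c r /\ 0 <= e /\ 4 * (r ^+ 2 - Rad ^+ 2) <= e ^+ 2.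
Let S i := [set v : R | exists c r e, T c r e /\ v = c ord0 i - e].

Lemma pairT c r e c' r' e' i : T c r e -> T c' r' e' ->
  c' ord0 i - e' <= c ord0 i + e.
Proof.
move=> [h1 [e0 he]] [h2 [e0' he']].
have := mid h1 h2; have := sq_coord c c' i => hc hm.
have hd : (c' ord0 i - c ord0 i) ^+ 2 <= (e + e') ^+ 2.
  rewrite -sqrrN opprB; nra.
have hee : 0 <= e + e' by lra.
nra.
Qed.



Let x0 : 'rV[R]_n := \row_i sup (S i).

Lemma xclose c r e : T c r e -> forall i,
  c ord0 i - e <= x0 ord0 i /\ x0 ord0 i <= c ord0 i + e.
Proof.
move=> hT i; rewrite /x0 mxE.
have Sc : S i (c ord0 i - e) by exists c, r, e.
have ub : ubound (S i) (c ord0 i + e).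
  by move=> v [c' [r' [e' [hT' ->]]]]; exact: pairT hT hT'.
split; last by apply: ge_sup => //; exists (c ord0 i - e).
by apply: ub_le_sup => //; exists (c ord0 i + e).
Qed.

Lemma xdist c r e : T c r e -> edist x0 c <= n%:R * e.
Proof.
move=> hT; have [_ [e0 _]] := hT.
have n1 : 1 <= n%:R :> R by rewrite ler1n.
rewrite edist_le; last by apply: mulr_ge0 => //; exact: ler0n.
apply: (@le_trans _ _ (\sum_(i < n) e ^+ 2)).
  apply: ler_sum => i _; have [h1 h2] := xclose hT i; nra.
rewrite sumr_const card_ord -mulr_natl; nra.
Qed.

Lemma Texists e : 0 < e -> e <= 1 -> exists c r, T c r e /\ r <= Rad + e.
Proof.
move=> e0 e1.
have R0 := Rad_ge0.
have D0 : 0 < 4 * (2 * Rad + 1) by lra.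
set t := Num.min 1 (e ^+ 2 / (4 * (2 * Rad + 1))).
have t0 : 0 < t by rewrite lt_min ltr01 /= divr_gt0 // exprn_gt0.
have t1 : t <= 1 by rewrite ge_min lexx.
have t2 : t * (4 * (2 * Rad + 1)) <= e ^+ 2.
  by rewrite -ler_pdivlMr // ge_min lexx orbT.
have [r Er hr] := inf_adherent t0 hasinfE.
have rR : Rad <= r := E_ge Er.
have [c hc] := Er.
exists c, r; split; last by nra.
split => //; split; first exact: ltW.
have : (r - Rad) * (r + Rad) <= t * (2 * Rad + 1).
  apply: ler_pM; lra.
nra.
Qed.

Lemma x0_center : K `<=` cball x0 Rad.
Proof.
move=> k Kk; rewrite /cball /=; apply/ler_addgt0Pr => eps eps0.
have n1 : 1 <= n%:R :> R by rewrite ler1n.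
set e := Num.min 1 (eps / (n%:R + 1)).
have e0 : 0 < e by rewrite lt_min ltr01 /= divr_gt0 //; lra.
have e1 : e <= 1 by rewrite ge_min lexx.
have e2 : e * (n%:R + 1) <= eps.
  by rewrite -ler_pdivlMr ?ge_min ?lexx ?orbT //; lra.
have [c [r [hT hr]]] := Texists e0 e1.
have h1 := xdist hT.
have h2 : edist c k <= r by have [hc _] := hT; exact: hc.
have := triangle x0 c k; nra.
Qed.

Let F := [set s : R | exists y, cball y s `<=` cdual K].

Lemma F1 x : K `<=` cball x Rad -> cball x (1 - Rad) `<=` cdual K.
Proof.
move=> hx y hy k Kk; rewrite in_setE /cball /=.
have := triangle k x y; have := hx _ Kk; rewrite /cball /= edist_sym.
move: hy; rewrite /cball /=; lra.
Qed.

Lemma F2 y s : 0 <= s -> cball y s `<=` cdual K -> K `<=` cball y (1 - s).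
Proof.
move=> s0 hy k Kk; rewrite /cball /=.
have [z [hz1 hz2]] := collinear hn y k s0.
have : cball y s z by rewrite /cball /= hz1.
move=> /hy /(_ k Kk); rewrite in_setE /cball /= edist_sym hz2; lra.
Qed.

Lemma Inrad_eq : Inrad (cdual K) = 1 - Rad.
Proof.
have R1 := Rad_le1.
have ub : ubound F (1 - Rad).
  move=> s [y hy]; have [s0|s0] := ltP s 0.
    have := Rad_le1; lra.
  have : E (1 - s) by exists y; exact: F2 s0 hy.
  move=> /E_ge; lra.
have F1R : F (1 - Rad) by exists x0; apply: F1; exact: x0_center.
apply/eqP; rewrite eq_le; apply/andP; split.
  by apply: ge_sup => //; exists (1 - Rad).
by apply: ub_le_sup => //; exists (1 - Rad).
Qed.

Lemma main_sec : Outrad K + Inrad (cdual K) = 1 /\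
  exists x : 'rV[R]_n,
    (forall y, K `<=` cball y (Outrad K) <-> y = x) /\
    (forall y, cball y (Inrad (cdual K)) `<=` cdual K <-> y = x).
Proof.
rewrite Inrad_eq -/Rad; split; first lra.
exists x0; split => y; split.
- by move=> hy; apply: uniq_center hy x0_center.
- by move=> ->; exact: x0_center.
- move=> hy; apply: uniq_center x0_center.
  have h0 : 0 <= 1 - Rad by have := Rad_le1; lra.
  have := F2 h0 hy; have -> : 1 - (1 - Rad) = Rad by ring.
  by [].
- by move=> ->; apply: F1; exact: x0_center.
Qed.

End Main.

Theorem lemma3p2 (R : realType) (n : nat) (K : set 'rV[R]_n) :
  (1 <= n)%N -> inS K -> K <> set0 -> K <> setT ->
  Outrad K + Inrad (cdual K) = 1 /\
  exists x : 'rV[R]_n,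
    (forall y, K `<=` cball y (Outrad K) <-> y = x) /\
    (forall y, cball y (Inrad (cdual K)) `<=` cdual K <-> y = x).
Proof.
move=> hn [A hA] hK0 hKT.
have /set0P [k0 hk0] : K != set0 by apply/eqP.
have [[a Aa]|nA] := pselect (exists a, A a); last first.
  exfalso; apply: hKT; rewrite hA; apply/seteqP; split => // y _ x Ax.
  by exfalso; apply: nA; exists x.
have hKa : K `<=` cball a 1.
  by move=> y; rewrite hA => /(_ a Aa); rewrite in_setE.
exact: (@main_sec R n K hn k0 a hk0 hKa).
Qed.
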